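(* Let $S=(P,L)$ be a finite $(2,t)$-generalized quadrangle and let $(R,\psi)$ be a faithful representation of $S$, with $\psi(x)=\langle r_x\rangle$ and $R_\psi=\{r_x:x\in P\}$. Assume that $(t,|R|)\neq(2,2^4)$. If $x,y\in P$ are distinct and $r_xr_y\in R_\psi$, then $x$ and $y$ are collinear.
   Context: A $(2,t)$-generalized quadrangle is a partial linear space in which every line has exactly $3$ points, every point lies on exactly $t+1$ lines, no point is collinear with all points, and for every point $x$ and line $\ell$ with $x\notin\ell$, $x$ is collinear with exactly one point of $\ell$. A representation $(R,\psi)$ of $S$ is a group $R$ with a map $\psi$ assigning to each point $x$ a subgroup $\psi(x)=\langle r_x\rangle$ of order $2$, such that $R$ is generated by the $r_x$ and, for every line $\{x,y,z\}$, $\{1,r_x,r_y,r_z\}$ is a Klein four subgroup. It is faithful if $\psi$ is injective. *)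

(* Defs.v *)
From mathcomp Require Import all_boot.
Set Implicit Arguments. Unset Strict Implicit. Unset Printing Implicit Defensive.

Section Geometry.
Variable P : finType.
Variable Lines : {set {set P}}.

(* x and y are collinear: some line contains both (reflexive on points lying
   on a line). *)
Definition collinear (x y : P) : bool :=
  [exists l in Lines, (x \in l) && (y \in l)].

Definition is_GQ2t (t : nat) : Prop :=
  (forall l1 l2, l1 \in Lines -> l2 \in Lines -> forall x y, x != y ->
      x \in l1 -> y \in l1 -> x \in l2 -> y \in l2 -> l1 = l2) /\
  (forall l, l \in Lines -> #|l| = 3) /\
  (forall x, #|[set l in Lines | x \in l]| = t.+1) /\
  (forall x, exists y, ~~ collinear x y) /\
  (forall x l, l \in Lines -> x \notin l -> #|[set y in l | collinear x y]| = 1).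
End Geometry.

Section Groups.
Variables (G : Type) (mul : G -> G -> G) (e : G) (inv : G -> G).

Definition is_group : Prop :=
  (forall a b c, mul a (mul b c) = mul (mul a b) c) /\
  (forall a, mul e a = a) /\
  (forall a, mul (inv a) a = e).

Inductive generated {I : Type} (r : I -> G) : G -> Prop :=
  | gen_one : generated r e
  | gen_gen i : generated r (r i)
  | gen_mul a b : generated r a -> generated r b -> generated r (mul a b)
  | gen_inv a : generated r a -> generated r (inv a).

Definition order_two (a : G) : Prop := a <> e /\ mul a a = e.

Definition klein_four (a b c : G) : Prop :=
  let S := fun g => g = e \/ g = a \/ g = b \/ g = c in
  [/\ [/\ a <> e, b <> e, c <> e & [/\ a <> b, a <> c & b <> c]],
      (forall g h, S g -> S h -> S (mul g h)),
      (forall g, S g -> S (inv g)) &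
      (forall g, S g -> mul g g = e)].

Definition has_card (n : nat) : Prop := exists f : G -> 'I_n, bijective f.
End Groups.

(* Representation (R, psi) of the geometry with psi(x) = <r x>. The group R is
   the whole carrier G (which must be generated by the r x). *)
Definition is_representation (P : finType) (Lines : {set {set P}})
  (G : Type) (mul : G -> G -> G) (e : G) (inv : G -> G) (r : P -> G) : Prop :=
  [/\ is_group mul e inv,
      (forall x, order_two mul e (r x)),
      (forall g, generated mul e inv r g) &
      (forall l, l \in Lines -> forall x y z, x \in l -> y \in l -> z \in l ->
         x != y -> y != z -> x != z -> klein_four mul e inv (r x) (r y) (r z))].

(* faithful: psi injective, i.e. x |-> <r x> injective, i.e. r injective *)
Definition is_faithful (P : finType) (G : Type) (r : P -> G) : Prop :=
  injective r.

(* Main.v *)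
Require Import Defs.
From mathcomp Require Import all_boot.
From Stdlib Require Import ClassicalEpsilon.
Set Implicit Arguments. Unset Strict Implicit. Unset Printing Implicit Defensive.

Section Grp.
Variables (G : Type) (mul : G -> G -> G) (e : G) (inv : G -> G).
Hypothesis hg : is_group mul e inv.

Lemma mulA a b c : mul a (mul b c) = mul (mul a b) c.
Proof. by case: hg. Qed.
Lemma mul1g a : mul e a = a.
Proof. by case: hg => _ []. Qed.
Lemma mulVg a : mul (inv a) a = e.
Proof. by case: hg => _ []. Qed.
Lemma mulgV a : mul a (inv a) = e.
Proof.
have h : mul (inv (inv a)) (inv a) = e by apply: mulVg.
rewrite -[mul a _]mul1g -{1}h -mulA [mul (inv a) (mul a _)]mulA mulVg mul1g.
exact: h.
Qed.
Lemma mulg1 a : mul a e = a.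
Proof. by rewrite -(mulVg a) mulA mulgV mul1g. Qed.
Lemma cancl a b c : mul a b = mul a c -> b = c.
Proof. by move=> h; rewrite -[b]mul1g -(mulVg a) -mulA h mulA mulVg mul1g. Qed.
Lemma cancr a b c : mul b a = mul c a -> b = c.
Proof. by move=> h; rewrite -[b]mulg1 -(mulgV a) mulA h -mulA mulgV mulg1. Qed.
Lemma inv_inv2 a : mul a a = e -> inv a = a.
Proof. by move=> h; apply: (@cancr a); rewrite mulVg h. Qed.

Lemma trip a b c : mul a a = e -> mul b b = e -> mul c c = e -> mul a b = c ->
  [/\ mul b a = c, mul a c = b, mul c a = b, mul b c = a & mul c b = a].
Proof.
move=> ha hb cc hc.
have h1 : mul a c = b by rewrite -hc mulA ha mul1g.
have h2 : mul c b = a by rewrite -hc -mulA hb mulg1.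
have h3 : mul b a = c.
  apply: (@cancl c); rewrite cc -{1}hc -mulA [mul b (mul b a)]mulA hb mul1g ha //.
by split => //; [rewrite -h3 -mulA ha mulg1 | rewrite -h3 mulA hb mul1g].
Qed.

Definition comm a b := mul a b = mul b a.
Lemma swap4 A X B Y : comm X B -> mul (mul A X) (mul B Y) = mul (mul A B) (mul X Y).
Proof. by move=> h; rewrite -mulA [mul X _]mulA h -mulA !mulA. Qed.
Lemma commML a b c : comm a c -> comm b c -> comm (mul a b) c.
Proof. by rewrite /comm => h1 h2; rewrite -mulA h2 mulA h1 -mulA. Qed.
Definition pw (b : bool) s := if b then s else e.
Lemma comm_pw b b' s s' : comm s s' -> comm (pw b s) (pw b' s').
Proof. by case: b; case: b' => //= h; rewrite /comm ?mulg1 ?mul1g. Qed.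
Lemma pw_sq b b' s : mul s s = e -> mul (pw b s) (pw b' s) = pw (b (+) b') s.
Proof. by case: b; case: b' => //= h; rewrite ?mulg1 ?mul1g. Qed.
End Grp.

Section Quad.
Variables (G : Type) (mul : G -> G -> G) (e : G) (inv : G -> G).
Hypothesis hg : is_group mul e inv.
Variables X Y U V : G.
Hypotheses (sX : mul X X = e) (sY : mul Y Y = e) (sU : mul U U = e) (sV : mul V V = e).
Hypotheses (cXY : comm mul X Y) (cXU : comm mul X U) (cXV : comm mul X V)
  (cYU : comm mul Y U) (cYV : comm mul Y V) (cUV : comm mul U V).

Definition quad := (bool * bool * bool * bool)%type.
Definition gq4 (q : quad) : G :=
  let: (b0, b1, b2, b3) := q in
  mul (pw e b0 X) (mul (pw e b1 Y) (mul (pw e b2 U) (pw e b3 V))).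
Definition xq (q q' : quad) : quad :=
  let: (b0, b1, b2, b3) := q in let: (c0, c1, c2, c3) := q' in
  (b0 (+) c0, b1 (+) c1, b2 (+) c2, b3 (+) c3).

Lemma commS a b : comm mul a b -> comm mul b a.
Proof. by rewrite /comm. Qed.

Lemma gq4_mul q q' : mul (gq4 q) (gq4 q') = gq4 (xq q q').
Proof.
case: q => [[[b0 b1] b2] b3]; case: q' => [[[c0 c1] c2] c3] /=.
have cp : forall s s' b b', comm mul s s' -> comm mul (pw e b s) (pw e b' s').
  by move=> s s' b b' h; apply: (comm_pw hg).
have k1 : comm mul (mul (pw e b1 Y) (mul (pw e b2 U) (pw e b3 V))) (pw e c0 X).
  apply: (commML hg); [| apply: (commML hg)]; apply: cp; apply: commS; assumption.
rewrite (swap4 hg _ _ k1).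
have k2 : comm mul (mul (pw e b2 U) (pw e b3 V)) (pw e c1 Y).
  apply: (commML hg); apply: cp; apply: commS; assumption.
rewrite (swap4 hg _ _ k2).
have k3 : comm mul (pw e b3 V) (pw e c2 U).
  apply: cp; apply: commS; assumption.
rewrite (swap4 hg _ _ k3).
by rewrite !(pw_sq hg).
Qed.

Lemma gq4_0 : gq4 (false, false, false, false) = e.
Proof. by rewrite /= !(mulg1 hg). Qed.

Lemma gq4_sq q : mul (gq4 q) (gq4 q) = e.
Proof. by rewrite gq4_mul; case: q => [[[[] []] []] []]; rewrite gq4_0. Qed.

Lemma gq4_inj q q' : (forall q0, gq4 q0 = e -> q0 = (false, false, false, false)) ->
  gq4 q = gq4 q' -> q = q'.
Proof.
move=> h eq.
have : gq4 (xq q q') = e by rewrite -gq4_mul eq gq4_sq.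
move/h; case: q {eq} => [[[b0 b1] b2] b3]; case: q' => [[[c0 c1] c2] c3] /=.
by case: b0; case: b1; case: b2; case: b3; case: c0; case: c1; case: c2; case: c3.
Qed.
End Quad.

Definition enc (i : 'I_16) : quad :=
  (odd i, odd i./2, odd i./2./2, odd i./2./2./2).
Definition dec (q : quad) : 'I_16 :=
  let: (b0, b1, b2, b3) := q in inord (b0 + 2 * b1 + 4 * b2 + 8 * b3).

Lemma dec_enc : cancel enc dec.
Proof.
case=> m hm; apply: val_inj => /=.
do 16! (case: m hm => [|m] hm; first by rewrite /dec /= inordK).
by [].
Qed.
Lemma enc_dec : cancel dec enc.
Proof. by case=> [[[[] []] []] []]; rewrite /enc /dec /= inordK. Qed.

Lemma has_card16 (G : Type) (f : quad -> G) :
  (forall h, exists q, h = f q) -> injective f -> has_card G 16.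
Proof.
move=> hs hi.
pose F h := dec (proj1_sig (constructive_indefinite_description _ (hs h))).
exists F; exists (fun i => f (enc i)).
- move=> h; rewrite /F; case: constructive_indefinite_description => q /= ->.
  by rewrite enc_dec.
- move=> i; rewrite /F; case: constructive_indefinite_description => q /= /hi <-.
  by rewrite dec_enc.
Qed.

Section Geo.
Variables (P : finType) (Lines : {set {set P}}) (t : nat)
  (G : Type) (mul : G -> G -> G) (e : G) (inv : G -> G) (r : P -> G).
Hypothesis hGQ : is_GQ2t Lines t.
Hypothesis hrep : is_representation Lines mul e inv r.
Hypothesis hfaith : is_faithful r.

Local Notation col := (collinear Lines).
Definition lines_at (c : P) := [set l in Lines | c \in l].

Lemma hgrp : is_group mul e inv. Proof. by case: hrep. Qed.
Lemma sq p : mul (r p) (r p) = e. Proof. by case: hrep => _ h _ _; case: (h p). Qed.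
Lemma rne p : r p <> e. Proof. by case: hrep => _ h _ _; case: (h p). Qed.
Lemma rinj p q : r p = r q -> p = q. Proof. exact: hfaith. Qed.

Lemma pls l1 l2 x y : l1 \in Lines -> l2 \in Lines -> x != y ->
      x \in l1 -> y \in l1 -> x \in l2 -> y \in l2 -> l1 = l2.
Proof. by move=> h1 h2 hxy; case: hGQ => h _; apply: (h l1 l2 h1 h2 x y hxy). Qed.
Lemma line3 l : l \in Lines -> #|l| = 3. Proof. by case: hGQ => _ [h _]; apply: h. Qed.
Lemma deg x : #|lines_at x| = t.+1. Proof. by case: hGQ => _ [_ [h _]]; apply: h. Qed.
Lemma gq x l : l \in Lines -> x \notin l -> #|[set y in l | col x y]| = 1.
Proof. by case: hGQ => _ [_ [_ [_ h]]]; apply: h. Qed.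

Lemma col_intro l x y : l \in Lines -> x \in l -> y \in l -> col x y.
Proof. by move=> hl hx hy; apply/existsP; exists l; rewrite hl hx hy. Qed.
Lemma col_elim x y : col x y -> exists l, [/\ l \in Lines, x \in l & y \in l].
Proof. by case/existsP => l /and3P [? ? ?]; exists l. Qed.
Lemma col_sym x y : col x y = col y x.
Proof.
by apply/idP/idP; case/col_elim => l [hl h1 h2]; apply: (col_intro hl).
Qed.
Lemma line_at x : exists l, l \in Lines /\ x \in l.
Proof.
have : 0 < #|lines_at x| by rewrite deg.
by rewrite card_gt0 => /set0Pn [l]; rewrite inE => /andP [? ?]; exists l.
Qed.
Lemma col_refl x : col x x.
Proof. by case: (line_at x) => l [hl hx]; apply: (col_intro hl). Qed.

Lemma gq_one x l : l \in Lines -> x \notin l -> exists2 y, y \in l & col x y.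
Proof.
move=> hl hx; move: (gq hl hx) => /eqP /cards1P [y hy].
have : y \in [set y in l | col x y] by rewrite hy inE.
by rewrite inE => /andP [? ?]; exists y.
Qed.

Lemma gq_uniq x l a b : l \in Lines -> x \notin l -> a \in l -> b \in l ->
  col x a -> col x b -> a = b.
Proof.
move=> hl hx ha hb xa xb; move: (gq hl hx) => /eqP /cards1P [y hy].
have : a \in [set y in l | col x y] by rewrite inE ha xa.
have : b \in [set y in l | col x y] by rewrite inE hb xb.
by rewrite hy !inE => /eqP -> /eqP ->.
Qed.

Lemma line_elems l p q : l \in Lines -> p \in l -> q \in l -> p != q ->
  exists w, [/\ w \in l, w != p, w != q &
     forall v, v \in l -> [\/ v = p, v = q | v = w]].
Proof.
move=> hl hp hq npq.
have h3 := line3 hl.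
have : #|l :\ p :\ q| = 1.
  move: h3; rewrite (cardsD1 p) hp (cardsD1 q) !inE eq_sym npq hq /=.
  by case.
move/eqP/cards1P => [w hw].
have hw' : w \in l :\ p :\ q by rewrite hw inE.
move: (hw'); rewrite !inE => /and3P [wq wp wl].
exists w; split => // v hv.
case: (eqVneq v p) => [->|vp]; first by constructor 1.
case: (eqVneq v q) => [->|vq]; first by constructor 2.
constructor 3; apply/eqP; rewrite -in_set1 -hw !inE vp vq hv.
done.
Qed.

Lemma rneq p q : p != q -> r p <> r q.
Proof. by move=> /eqP h /rinj. Qed.

Lemma third l p q w : l \in Lines -> p \in l -> q \in l -> w \in l ->
  p != q -> q != w -> p != w -> mul (r p) (r q) = r w.
Proof.
move=> hl hp hq hw pq qw pw.
case: hrep => hg _ _ /(_ l hl p q w hp hq hw pq qw pw) [_ hcl _ _].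
have := hcl (r p) (r q) (or_intror (or_introl erefl))
   (or_intror (or_intror (or_introl erefl))).
case=> [h|[h|[h|h]]] //.
- exfalso; apply: (rneq pq); apply: (cancr hg (a := r q)); by rewrite h sq.
- case: (@rne q); apply: (cancl hg (a := r p)); rewrite h (mulg1 hg) //.
- case: (@rne p); apply: (cancr hg (a := r q)); rewrite h (mul1g hg) //.
Qed.

Lemma third_ex p q : p != q -> col p q -> exists l w,
  [/\ l \in Lines, p \in l, q \in l, w \in l &
      [/\ w != p, w != q, mul (r p) (r q) = r w &
         forall v, v \in l -> [\/ v = p, v = q | v = w]]].
Proof.
move=> pq /col_elim [l [hl hp hq]].
case: (line_elems hl hp hq pq) => w [hw wp wq hall].
exists l, w; split => //; split => //.
by apply: (third hl) => //; rewrite eq_sym.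
Qed.

Lemma two_col x l a b : l \in Lines -> x \notin l -> a \in l -> b \in l ->
  col x a -> col x b -> a != b -> False.
Proof. by move=> hl hx ha hb xa xb /eqP; apply; apply: (gq_uniq hl hx). Qed.

Lemma inv_r p : inv (r p) = r p.
Proof. apply: (inv_inv2 hgrp); exact: sq. Qed.

Lemma tripr p q w : mul (r p) (r q) = r w ->
  [/\ mul (r q) (r p) = r w, mul (r p) (r w) = r q, mul (r w) (r p) = r q,
      mul (r q) (r w) = r p & mul (r w) (r q) = r p].
Proof. by move=> h; apply: (trip hgrp) => //; apply: sq. Qed.

Lemma col_ne p q : ~~ col p q -> p != q.
Proof. by apply: contra => /eqP ->; apply: col_refl. Qed.

Lemma A0 p q w : ~~ col p q -> mul (r p) (r q) = r w -> ~~ col w p.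
Proof.
move=> npq h; apply/negP => wp.
have hwp : w != p.
  apply/eqP => ew; subst w; apply: (@rne q); apply: (cancl hgrp (a := r p)).
  by rewrite h (mulg1 hgrp).
case: (third_ex hwp wp) => l [m [hl hw hp hm [mw mp hm' _]]].
have [_ _ h3 _ _] := tripr h.
rewrite h3 in hm'; move/rinj: hm' => eq; subst m.
by rewrite (col_intro hl hp hm) in npq.
Qed.

Lemma A p q w v : ~~ col p q -> mul (r p) (r q) = r w -> col v p -> col v q ->
  v != p -> v != q -> col w v.
Proof.
move=> npq h vp vq nvp nvq.
case: (boolP (col w v)) => // nwv; exfalso.
have wp := A0 npq h.
have [h1 _ _ _ _] := tripr h.
have wq : ~~ col w q by apply: (A0 _ h1); rewrite col_sym.
have pv : p != v by rewrite eq_sym.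
have qv : q != v by rewrite eq_sym.
case: (third_ex pv (etrans (col_sym _ _) vp)) => l1 [a [hl1 hp1 hv1 ha1 [ap av hpa al1]]].
case: (third_ex qv (etrans (col_sym _ _) vq)) => l2 [b [hl2 hq2 hv2 hb2 [bq bv hqb bl2]]].
have wl1 : w \notin l1.
  by apply/negP => wl; rewrite (col_intro hl1 wl hp1) in wp.
have wl2 : w \notin l2.
  by apply/negP => wl; rewrite (col_intro hl2 wl hq2) in wq.
have wa : col w a.
  case: (gq_one hl1 wl1) => y /al1 [->|->|->] //; by rewrite ?(negbTE wp) ?(negbTE nwv).
have wb : col w b.
  case: (gq_one hl2 wl2) => y /bl2 [->|->|->] //; by rewrite ?(negbTE wq) ?(negbTE nwv).
have wa' : w != a by apply/eqP => ea; rewrite ea ha1 in wl1.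
case: (third_ex wa' wa) => l3 [c [hl3 hw3 ha3 hc3 [cw ca hc _]]].
have ec : c = b.
  apply: rinj; rewrite -hc -hpa (mulA hgrp).
  by have [_ _ -> _ _] := tripr h.
subst c.
have vl3 : v \notin l3 by apply/negP => vl; rewrite (col_intro hl3 hw3 vl) in nwv.
apply: (two_col hl3 vl3 ha3 hc3).
- by rewrite col_sym (col_intro hl1 ha1 hv1).
- by rewrite col_sym (col_intro hl2 hb2 hv2).
apply/eqP => eab; subst b.
have : r p = r q by apply: (cancr hgrp (a := r v)); rewrite hpa hqb.
move/rinj => epq; subst q.
by rewrite col_refl in npq.
Qed.

Lemma nc3 v l a b : l \in Lines -> v \notin l -> a \in l -> b \in l -> a != b ->
  col v a -> ~~ col v b.
Proof. by move=> hl hv ha hb ab va; apply/negP => vb; apply: (two_col hl hv ha hb va vb ab). Qed.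

Lemma notin_of_ncol v l p : l \in Lines -> p \in l -> ~~ col v p -> v \notin l.
Proof. by move=> hl hp; apply: contra => hv; apply: (col_intro hl hv hp). Qed.

Section Conf.
Variables x y z : P.
Hypothesis nxy : ~~ col x y.
Hypothesis hz : mul (r x) (r y) = r z.

Lemma nzx : ~~ col z x. Proof. exact: A0 nxy hz. Qed.
Lemma nzy : ~~ col z y.
Proof. have [h _ _ _ _] := tripr hz; apply: (A0 _ h); by rewrite col_sym. Qed.
Lemma nxz : ~~ col x z. Proof. by rewrite col_sym nzx. Qed.
Lemma nyz : ~~ col y z. Proof. by rewrite col_sym nzy. Qed.

Definition inU u := col x u && col y u.

Lemma U_nex u : inU u -> u != x.
Proof. case/andP => _ yu; apply/eqP => eu; subst u; by move: nxy; rewrite col_sym yu. Qed.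
Lemma U_ney u : inU u -> u != y.
Proof. case/andP => xu _; apply/eqP => eu; subst u; by move: nxy; rewrite xu. Qed.
Lemma U_z u : inU u -> col z u.
Proof.
move=> hu; have := hu; case/andP => xu yu.
apply: (A nxy hz); rewrite 1?col_sym //; [exact: U_nex | exact: U_ney].
Qed.
Lemma U_nez u : inU u -> u != z.
Proof. case/andP => xu _; apply/eqP => eu; subst u; by move: nxz; rewrite xu. Qed.

Lemma U_nc u u' : inU u -> inU u' -> u != u' -> ~~ col u u'.
Proof.
move=> /andP [xu yu] /andP [xu' yu'] uu'; apply/negP => /col_elim [l [hl hu hu']].
case: (boolP (x \in l)) => xl.
- have yl : y \notin l by apply: (notin_of_ncol hl xl); rewrite col_sym.
  exact: (two_col hl yl hu hu' yu yu' uu').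
- exact: (two_col hl xl hu hu' xu xu' uu').
Qed.

Lemma U_ex : exists u, inU u.
Proof.
case: (line_at y) => l [hl hy].
have xl : x \notin l by apply: (notin_of_ncol hl hy).
case: (gq_one hl xl) => u hu xu; exists u; rewrite /inU xu.
exact: (col_intro hl hy hu).
Qed.

Lemma U_ex2 u1 : 0 < t -> inU u1 -> exists2 u2, inU u2 & u2 != u1.
Proof.
move=> t0 hu1; have := hu1; case/andP => xu1 yu1.
case/col_elim: xu1 => L1 [hL1 hx1 hu1'].
have : ~~ (lines_at x \subset [set L1]).
  apply/negP => /subset_leq_card; rewrite cards1 deg; by case: t t0.
case/subsetPn => l; rewrite !inE => /andP [hl xl] lL1.
have yl : y \notin l by apply: (notin_of_ncol hl xl); rewrite col_sym.
case: (gq_one hl yl) => u2 hu2 yu2; exists u2.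
  by rewrite /inU yu2 (col_intro hl xl hu2).
apply/eqP => e2; subst u2.
have : l = L1 by apply: (pls hl hL1 (U_nex hu1)).
by move/eqP; rewrite (negbTE lL1).
Qed.

Lemma far w u : ~~ col w x -> ~~ col w y -> ~~ col w z -> inU u -> col w u.
Proof.
move=> wx wy wz hu; case: (boolP (col w u)) => // nwu; exfalso.
have := hu; case/andP => xu yu.
case: (third_ex (U_nex hu) (etrans (col_sym _ _) xu)) => l1 [a [hl1 hu1 hx1 ha1 [au ax hua al1]]].
case: (third_ex (U_ney hu) (etrans (col_sym _ _) yu)) => l2 [b [hl2 hu2 hy2 hb2 [bu bby hub bl2]]].
have [hux _ hax _ _] := tripr hua.
have [huy _ hby _ _] := tripr hub.
have wl1 : w \notin l1 by apply: (notin_of_ncol hl1 hx1).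
have wl2 : w \notin l2 by apply: (notin_of_ncol hl2 hy2).
have wa : col w a.
  by case: (gq_one hl1 wl1) => v /al1 [->|->|->] //; rewrite ?(negbTE wx) ?(negbTE nwu).
have wb : col w b.
  by case: (gq_one hl2 wl2) => v /bl2 [->|->|->] //; rewrite ?(negbTE wy) ?(negbTE nwu).
have hab : mul (r a) (r b) = r z.
  have cuy : comm mul (r u) (r y) by rewrite /comm hub huy.
  by rewrite -hux -huy (swap4 hgrp _ _ cuy) sq (mulg1 hgrp).
have zl1 : z \notin l1 by apply: (notin_of_ncol hl1 hx1); exact: nzx.
have nab : ~~ col a b.
  apply/negP => ab.
  have abne : a != b.
    apply/eqP => eab; subst b; have : r x = r y.
      by apply: (cancr hgrp (a := r u)); rewrite hux huy.
    by move/rinj => exy; move: nxy; rewrite exy col_refl.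
  case: (third_ex abne ab) => l3 [c [hl3 ha3 hb3 hc3 [_ _ hc _]]].
  rewrite hab in hc; move/rinj: hc => ec; subst c.
  have za : col z a by apply: (col_intro hl3 hc3 ha3).
  apply: (two_col hl1 zl1 hu1 ha1 (U_z hu) za); by rewrite eq_sym.
have wa' : w != a by apply/eqP => ea; rewrite ea ha1 in wl1.
have wb' : w != b by apply/eqP => eb; rewrite eb hb2 in wl2.
have := A nab hab wa wb wa' wb'.
by rewrite col_sym (negbTE wz).
Qed.

Lemma U_comm u : inU u ->
  mul (r u) (r x) = mul (r x) (r u) /\ mul (r u) (r y) = mul (r y) (r u).
Proof.
move=> hu; have := hu; case/andP => xu yu.
case: (third_ex (U_nex hu) (etrans (col_sym _ _) xu)) => l1 [a [_ _ _ _ [_ _ h1 _]]].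
case: (third_ex (U_ney hu) (etrans (col_sym _ _) yu)) => l2 [b [_ _ _ _ [_ _ h2 _]]].
have [h1' _ _ _ _] := tripr h1; have [h2' _ _ _ _] := tripr h2.
by rewrite h1 h1' h2 h2'.
Qed.

Lemma lemC u u' : inU u -> inU u' -> u != u' -> exists2 m, inU m & mul (r u) (r u') = r m.
Proof.
move=> hu hu' uu'.
have := hu; case/andP => xu yu; have := hu'; case/andP => xu' yu'.
have xu0 : x != u by rewrite eq_sym U_nex.
have yu0 : y != u' by rewrite eq_sym U_ney.
case: (third_ex xu0 xu) => l1 [a [hl1 hx1 hu1 ha1 [ax au hxa al1]]].
case: (third_ex yu0 yu') => l2 [b [hl2 hy2 hu2 hb2 [bby bu hyb bl2]]].
have yl1 : y \notin l1 by apply: (notin_of_ncol hl1 hx1); rewrite col_sym.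
have ua : u != a by rewrite eq_sym.
have ya : ~~ col y a by apply: (nc3 hl1 yl1 hu1 ha1 ua).
have al2 : a \notin l2 by apply: (notin_of_ncol hl2 hy2); rewrite col_sym.
have u'l1 : u' \notin l1.
  by apply: (notin_of_ncol hl1 hu1); apply: U_nc => //; rewrite eq_sym.
have xa' : x != a by rewrite eq_sym.
have u'a : ~~ col u' a by apply: (nc3 hl1 u'l1 hx1 ha1 xa'); rewrite col_sym.
have ab : col a b.
  case: (gq_one hl2 al2) => v /bl2 [->|->|->] //.
  - by rewrite col_sym (negbTE ya).
  - by rewrite col_sym (negbTE u'a).
have ab' : a != b by apply/eqP => eab; rewrite eab hb2 in al2.
case: (third_ex ab' ab) => l3 [q [hl3 ha3 hb3 hq3 [qa qb hab al3]]].
have hq : r q = mul (r z) (mul (r u) (r u')).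
  have [_ cuy] := U_comm hu.
  by rewrite -hab -hxa -hyb (swap4 hgrp _ _ cuy) hz.
have xl2 : x \notin l2 by apply: (notin_of_ncol hl2 hy2).
have u'b : u' != b by rewrite eq_sym.
have xb : ~~ col x b by apply: (nc3 hl2 xl2 hu2 hb2 u'b).
have zl1 : z \notin l1 by apply: (notin_of_ncol hl1 hx1 nzx).
have za : ~~ col z a by apply: (nc3 hl1 zl1 hu1 ha1 ua); apply: U_z.
have zl3 : z \notin l3 by apply: (notin_of_ncol hl3 ha3 za).
have zq : col z q.
  case: (gq_one hl3 zl3) => v /al3 [->|->|->] //.
  - by rewrite (negbTE za).
  - have zl2 : z \notin l2 by apply: (notin_of_ncol hl2 hy2 nzy).
    by rewrite (negbTE (nc3 hl2 zl2 hu2 hb2 u'b (U_z hu'))).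
have zq' : z != q by apply/eqP => ezq; rewrite ezq hq3 in zl3.
case: (third_ex zq' zq) => l4 [m [hl4 hz4 hq4 hm4 [mz mq hzq al4]]].
have hm : mul (r u) (r u') = r m.
  by rewrite -hzq hq (mulA hgrp) sq (mul1g hgrp).
exists m => //.
have xl4 : x \notin l4 by apply: (notin_of_ncol hl4 hz4 nxz).
have xl3 : x \notin l3 by apply: (notin_of_ncol hl3 hb3 xb).
have aq : a != q by rewrite eq_sym.
have xq : ~~ col x q by apply: (nc3 hl3 xl3 ha3 hq3 aq); apply: (col_intro hl1 hx1 ha1).
have yl4 : y \notin l4 by apply: (notin_of_ncol hl4 hz4 nyz).
have yl3 : y \notin l3 by apply: (notin_of_ncol hl3 ha3 ya).
have bq : b != q by rewrite eq_sym.
have yq : ~~ col y q by apply: (nc3 hl3 yl3 hb3 hq3 bq); apply: (col_intro hl2 hy2 hb2).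
apply/andP; split.
- case: (gq_one hl4 xl4) => v /al4 [->|->|->] //.
  + by rewrite (negbTE nxz).
  + by rewrite (negbTE xq).
- case: (gq_one hl4 yl4) => v /al4 [->|->|->] //.
  + by rewrite (negbTE nyz).
  + by rewrite (negbTE yq).
Qed.

End Conf.

Lemma star c a1 a2 a3 : col c a1 -> col c a2 -> col c a3 ->
  ~~ col a1 a2 -> ~~ col a1 a3 -> ~~ col a2 a3 ->
  exists L1 L2 L3, [/\ [/\ L1 \in lines_at c, L2 \in lines_at c & L3 \in lines_at c],
     [/\ a1 \in L1, a2 \in L2 & a3 \in L3] & #|[set L1; L2; L3]| = 3].
Proof.
move=> /col_elim [L1 [h1 c1 a1L]] /col_elim [L2 [h2 c2 a2L]] /col_elim [L3 [h3 c3 a3L]] n12 n13 n23.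
exists L1, L2, L3; split; first by split; rewrite inE ?h1 ?h2 ?h3 ?c1 ?c2 ?c3.
  by [].
rewrite -setUA cardsU1 cards2 !inE.
have d12 : L1 != L2 by apply/eqP => e12; rewrite e12 in a1L; rewrite (col_intro h2 a1L a2L) in n12.
have d13 : L1 != L3 by apply/eqP => e13; rewrite e13 in a1L; rewrite (col_intro h3 a1L a3L) in n13.
have d23 : L2 != L3 by apply/eqP => e23; rewrite e23 in a2L; rewrite (col_intro h3 a2L a3L) in n23.
by rewrite (negbTE d12) (negbTE d13) d23.
Qed.

Lemma star_t c a1 a2 a3 : col c a1 -> col c a2 -> col c a3 ->
  ~~ col a1 a2 -> ~~ col a1 a3 -> ~~ col a2 a3 -> 2 <= t.
Proof.
move=> c1 c2 c3 n12 n13 n23.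
case: (star c1 c2 c3 n12 n13 n23) => L1 [L2 [L3 [[i1 i2 i3] _ hc]]].
have : [set L1; L2; L3] \subset lines_at c.
  by apply/subsetP => l; rewrite !in_setU !in_set1 => /orP [/orP [] |] /eqP ->.
by move/subset_leq_card; rewrite hc deg.
Qed.

Lemma star2 c a1 a2 a3 : t = 2 -> col c a1 -> col c a2 -> col c a3 ->
  ~~ col a1 a2 -> ~~ col a1 a3 -> ~~ col a2 a3 ->
  forall l, l \in Lines -> c \in l -> [\/ a1 \in l, a2 \in l | a3 \in l].
Proof.
move=> t2 c1 c2 c3 n12 n13 n23 l hl cl.
case: (star c1 c2 c3 n12 n13 n23) => L1 [L2 [L3 [[i1 i2 i3] [b1 b2 b3] hc]]].
have sub : [set L1; L2; L3] \subset lines_at c.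
  by apply/subsetP => l'; rewrite !in_setU !in_set1 => /orP [/orP [] |] /eqP ->.
have eq : [set L1; L2; L3] = lines_at c.
  by apply/eqP; rewrite eqEcard sub hc deg t2.
have : l \in lines_at c by rewrite inE hl cl.
rewrite -eq !inE => /orP [/orP [] |] /eqP ->; by [constructor 1 | constructor 2 | constructor 3].
Qed.

Section Conf2.
Variables x y z : P.
Hypothesis nxy : ~~ col x y.
Hypothesis hz : mul (r x) (r y) = r z.

Local Notation inU := (inU x y).

Lemma t_ge2 : 2 <= t.
Proof.
case: (U_ex nxy) => u hu; have := hu; case/andP => xu yu.
apply: (star_t (c := u) (a1 := x) (a2 := y) (a3 := z)); rewrite ?(col_sym u) //.
- exact: (U_z nxy hz).
- exact: (nxz nxy hz).
- exact: (nyz nxy hz).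
Qed.

Lemma t_le2 : t <= 2.
Proof.
rewrite leqNgt; apply/negP => t3.
case: (U_ex nxy) => u hu; have := hu; case/andP => xu yu.
have zu := U_z nxy hz hu.
have nxz' := nxz nxy hz; have nyz' := nyz nxy hz.
case: (star (c := u) (a1 := x) (a2 := y) (a3 := z)); rewrite ?(col_sym u) // => Lx [Ly [Lz [[ix iy iz] [bx bby bz] hc]]].
have : ~~ (lines_at u \subset [set Lx; Ly; Lz]).
  by apply/negP => /subset_leq_card; rewrite deg hc; case: t t3 => [|[|[|]]].
case/subsetPn => m; rewrite !inE => /andP [hm um] /norP [/norP [mx my] mz].
have notin v L : L \in lines_at u -> v \in L -> v != u -> m != L -> v \notin m.
  rewrite inE => /andP [hL uL] vL vu mL; apply/negP => vm.
  by move/eqP: mL; apply; apply: (pls hm hL vu vm um vL uL).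
have xm : x \notin m by apply: (notin x Lx ix bx) => //; rewrite eq_sym; exact: (U_nex nxy hu).
have ym : y \notin m by apply: (notin y Ly iy bby) => //; rewrite eq_sym; exact: (U_ney nxy hu).
have zm : z \notin m by apply: (notin z Lz iz bz) => //; rewrite eq_sym; exact: (U_nez nxy hz hu).
have c2 : #|m :\ u| = 2.
  by move: (line3 hm); rewrite (cardsD1 u) um => /eqP; rewrite add1n eqSS => /eqP.
have : 0 < #|m :\ u| by rewrite c2.
rewrite card_gt0 => /set0Pn [p]; rewrite !inE => /andP [pu pm].
have up : u != p by rewrite eq_sym.
case: (line_elems hm um pm up) => w [wm wu wp _].
have uw : u != w by rewrite eq_sym.
have nc v q : v \notin m -> col v u -> u != q -> q \in m -> ~~ col q v.
  by move=> vm vu uq qm; rewrite col_sym; apply: (nc3 hm vm um qm uq vu).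
case: (U_ex2 nxy (leq_trans (isT : 0 < 3) t3) hu) => u2 hu2 u21.
have pu2 : col p u2.
  apply: (far nxy hz) => //; apply: nc => //; by rewrite col_sym.
have wu2 : col w u2.
  apply: (far nxy hz) => //; apply: nc => //; by rewrite col_sym.
have u2m : u2 \notin m by apply: (notin_of_ncol hm um); apply: (U_nc nxy).
by apply: (two_col hm u2m pm wm); rewrite 1?col_sym // eq_sym.
Qed.

End Conf2.

Section Conf3.
Variables x y z : P.
Hypothesis nxy : ~~ col x y.
Hypothesis hz : mul (r x) (r y) = r z.
Local Notation inU := (inU x y).

Lemma t2 : t = 2.
Proof. by apply/eqP; rewrite eqn_leq (t_le2 nxy hz) (t_ge2 nxy hz). Qed.

Lemma U_ex3 : exists u1 u2 u3, [/\ [/\ inU u1, inU u2 & inU u3], u1 != u2 &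
   mul (r u1) (r u2) = r u3].
Proof.
case: (U_ex nxy) => u1 hu1.
have t0 : 0 < t by rewrite t2.
case: (U_ex2 nxy t0 hu1) => u2 hu2 u21.
have u12 : u1 != u2 by rewrite eq_sym.
case: (lemC nxy hz hu1 hu2 u12) => u3 hu3 h3.
by exists u1, u2, u3.
Qed.

Lemma inT_U v w : (v = x \/ v = y \/ v = z) -> inU w -> col v w /\ v != w.
Proof.
move=> hv hw; have := hw; case/andP => xw yw.
case: hv => [->|[->|->]].
- by split => //; rewrite eq_sym (U_nex nxy hw).
- by split => //; rewrite eq_sym (U_ney nxy hw).
- by split; [exact: (U_z nxy hz hw) | rewrite eq_sym (U_nez nxy hz hw)].
Qed.

Lemma t2_card : has_card G 16.
Proof.
case: U_ex3 => u1 [u2 [u3 [[hu1 hu2 hu3] u12 h3]]].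
have [h21 h13 h31 h23 h32] := tripr h3.
have [hyx hxz hzx hyz hzy] := tripr hz.
have [cx1 cy1] := U_comm nxy hu1.
have [cx2 cy2] := U_comm nxy hu2.
pose f := gq4 mul e (r x) (r y) (r u1) (r u2).
have ff := gq4_mul hgrp (sq x) (sq y) (sq u1) (sq u2).
have cXY : comm mul (r x) (r y) by rewrite /comm hz hyx.
have cXU : comm mul (r x) (r u1) by rewrite /comm cx1.
have cXV : comm mul (r x) (r u2) by rewrite /comm cx2.
have cYU : comm mul (r y) (r u1) by rewrite /comm cy1.
have cYV : comm mul (r y) (r u2) by rewrite /comm cy2.
have cUV : comm mul (r u1) (r u2) by rewrite /comm h3 h21.
have fmul q q' : mul (f q) (f q') = f (xq q q') by apply: ff.
pose img h := exists q, h = f q.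
have img_mul a b : img a -> img b -> img (mul a b).
  by move=> [q ->] [q' ->]; exists (xq q q').
have m1 := mul1g hgrp; have m2 := mulg1 hgrp.
have ix : img (r x) by exists (true, false, false, false); rewrite /f /= !m1 m2.
have iy : img (r y) by exists (false, true, false, false); rewrite /f /= !m1 m2.
have i1 : img (r u1) by exists (false, false, true, false); rewrite /f /= !m1 m2.
have i2 : img (r u2) by exists (false, false, false, true); rewrite /f /= !m1.
have iz : img (r z) by rewrite -hz; apply: img_mul.
have i3 : img (r u3) by rewrite -h3; apply: img_mul.
have nxz' := nxz nxy hz; have nyz' := nyz nxy hz.
have n12 := U_nc nxy hu1 hu2 u12.
(* every point of U is u1, u2 or u3 *)
have hU v : inU v -> img (r v).
  move=> hv; have := hv; case/andP => xv yv.
  have u13 : u1 != u3.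
    apply/eqP => e13; apply: (@rne u2); apply: (cancl hgrp (a := r u1)).
    by rewrite m2 h3 e13.
  have u23 : u2 != u3.
    apply/eqP => e23; apply: (@rne u1); apply: (cancr hgrp (a := r u2)).
    by rewrite m1 h3 e23.
  have n13 := U_nc nxy hu1 hu3 u13.
  have n23 := U_nc nxy hu2 hu3 u23.
  case/col_elim: (xv) => l [hl xl vl].
  have yl : y \notin l by apply: (notin_of_ncol hl xl); rewrite col_sym.
  have := star2 t2 (proj1 (andP hu1)) (proj1 (andP hu2)) (proj1 (andP hu3)) n12 n13 n23 hl xl.
  case=> ul.
  - have -> // : v = u1 by apply: (gq_uniq hl yl vl ul yv (proj2 (andP hu1))).
  - have -> // : v = u2 by apply: (gq_uniq hl yl vl ul yv (proj2 (andP hu2))).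
  - have -> // : v = u3 by apply: (gq_uniq hl yl vl ul yv (proj2 (andP hu3))).
have near tau tau' p : ~~ col tau tau' -> (forall v, col tau v -> col tau' v -> inU v) ->
    img (r tau) -> col tau p -> img (r p).
  move=> ntt hperp itau tp.
  case: (eqVneq p tau) => [->//|ptau].
  case/col_elim: tp => l [hl taul pl].
  have t'l : tau' \notin l by apply: (notin_of_ncol hl taul); rewrite col_sym.
  case: (gq_one hl t'l) => v vl t'v.
  have tv : col tau v by apply: (col_intro hl taul vl).
  have hv := hperp v tv t'v.
  case: (eqVneq v p) => [<-|vp]; first exact: hU.
  have tauv : tau != v by apply/eqP => etv; rewrite -etv in t'v; rewrite col_sym t'v in ntt.
  rewrite -(third hl taul vl pl tauv vp); last by rewrite eq_sym.
  by apply: img_mul => //; apply: hU.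
have hpt p : img (r p).
  case: (boolP (col x p)) => [xp|nxp].
    by apply: (near x y) => // v ? ?; apply/andP.
  case: (boolP (col y p)) => [yp|nyp].
    by apply: (near y x) => // [|v ? ?]; [rewrite col_sym | apply/andP].
  case: (boolP (col z p)) => [zp|nzp].
    apply: (near z x) => //; first by rewrite col_sym.
    move=> v zv xv; apply/andP; split => //.
    have vx : v != x by apply/eqP => evx; rewrite evx in zv; rewrite col_sym zv in nxz'.
    have vz : v != z by apply/eqP => evz; rewrite evz in xv; rewrite xv in nxz'.
    by apply: (A nxz' hxz); rewrite // col_sym.
  exfalso.
  have pu1 : col p u1 by apply: (far nxy hz) => //; rewrite col_sym.
  case/col_elim: pu1 => l [hl pl u1l].
  have := star2 t2 (c := u1) (a1 := x) (a2 := y) (a3 := z).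
  rewrite !(col_sym u1) (U_z nxy hz hu1) (proj1 (andP hu1)) (proj2 (andP hu1)).
  move=> /(_ erefl erefl erefl nxy nxz' nyz' l hl u1l) [] h.
  - by rewrite (col_intro hl h pl) in nxp.
  - by rewrite (col_intro hl h pl) in nyp.
  - by rewrite (col_intro hl h pl) in nzp.
have surj : forall h, exists q, h = f q.
  case: hrep => _ _ hgen _ h; elim: (hgen h).
  - by exists (false, false, false, false); rewrite /f (gq4_0 hgrp).
  - by move=> p; apply: hpt.
  - by move=> a b _ ia _ ib; apply: img_mul.
  - move=> a _ [q ->]; exists q; apply: (inv_inv2 hgrp).
    exact: (gq4_sq hgrp (sq x) (sq y) (sq u1) (sq u2)).
apply: (has_card16 surj).
move=> q q'; apply: (gq4_inj hgrp (sq x) (sq y) (sq u1) (sq u2)) => //.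
have hT b0 b1 : (b0 = false /\ b1 = false) \/
   exists tau, (tau = x \/ tau = y \/ tau = z) /\ mul (pw e b0 (r x)) (pw e b1 (r y)) = r tau.
  case: b0; case: b1 => /=.
  - by right; exists z; split; [right; right|].
  - by right; exists x; split; [left|rewrite m2].
  - by right; exists y; split; [right; left|rewrite m1].
  - by left.
have hUU b2 b3 : (b2 = false /\ b3 = false) \/
   exists w, inU w /\ mul (pw e b2 (r u1)) (pw e b3 (r u2)) = r w.
  case: b2; case: b3 => /=.
  - by right; exists u3.
  - by right; exists u1; rewrite m2.
  - by right; exists u2; rewrite m1.
  - by left.
case=> [[[b0 b1] b2] b3]; rewrite /f /gq4 (mulA hgrp).
case: (hT b0 b1) => [[-> ->]|[tau [htau ->]]];
  case: (hUU b2 b3) => [[-> ->]|[w [hw ->]]] /=.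
- by [].
- by rewrite !m1 => hh; exfalso; exact: (@rne w hh).
- by rewrite !m2 => hh; exfalso; exact: (@rne tau hh).
- case: (inT_U htau hw) => tw tw'.
  case: (third_ex tw' tw) => l [q0 [_ _ _ _ [_ _ -> _]]].
  by move=> hh; exfalso; exact: (@rne q0 hh).
Qed.

End Conf3.
End Geo.

Theorem proposition3p3 (P : finType) (Lines : {set {set P}}) (t : nat)
  (G : Type) (mul : G -> G -> G) (e : G) (inv : G -> G) (r : P -> G) :
  is_GQ2t Lines t ->
  is_representation Lines mul e inv r ->
  is_faithful r ->
  ~ (t = 2 /\ has_card G 16) ->
  forall x y : P, x != y ->
  (exists z : P, mul (r x) (r y) = r z) ->
  collinear Lines x y.
Proof.
move=> hGQ hrep hf hno x y _ [z hz].
case: (boolP (collinear Lines x y)) => // nxy; exfalso; apply: hno.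
split; first exact: (t2 hGQ hrep hf nxy hz).
exact: (t2_card hGQ hrep hf nxy hz).
Qed.
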